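(* Let $\mathbf T$ be a countably infinite homogeneous tournament and $\mathbf T^*$ an expansion of $\mathbf T$ as in the context. If $\mathrm{Age}(\mathbf T^* )$ has the expansion property relative to $\mathrm{Age}(\mathbf T)$, then $\mathrm{Age}(\mathbf T[I_\omega]^* )$ has the expansion property relative to $\mathrm{Age}(\mathbf T[I_\omega])$, where $\mathbf T[I_\omega]$ is the reduct of $\mathbf T[I_\omega]^*$ to $\{E\}$.
   Context: The age $\mathrm{Age}(\mathbf F)$ of a structure $\mathbf F$ is the class of finite structures embeddable in $\mathbf F$. Expansion property: let $L\subseteq L^*$ be relational languages, $\mathcal K$ a class of finite $L$-structures and $\mathcal K^*$ a class of finite $L^*$-structures whose $L$-reducts lie in $\mathcal K$. $\mathcal K^*$ has the expansion property relative to $\mathcal K$ if for every $\mathbf A\in\mathcal K$ there is $\mathbf B\in\mathcal K$ such that for all $\mathbf A^*,\mathbf B^*\in\mathcal K^*$ whose $L$-reducts are $\mathbf A$ and $\mathbf B$ respectively, $\mathbf A^*$ embeds into $\mathbf B^*$. A tournament is a directed graph in which every pair of distinct vertices carries exactly one directed edge; it is homogeneous if every isomorphism between finite substructures extends to an automorphism. $\mathbf T=(T,E^{\mathbf T})$ is a countable homogeneous tournament, and $\mathbf T^*$ is an expansion of $\mathbf T$ to a countable relational language $L_{\mathbf T^*}\supseteq\{E,<\}$ in which $<$ is interpreted as a linear order $<^*$ on $T$. Fix a linear order $\prec$ on $\mathbb N$ with $(\mathbb N,\prec)\cong(\mathbb Q,<)$. The structure $\mathbf T[I_\omega]^*$ has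 universe $T\times\mathbb N$ and language $L_{\mathbf T^*}$, interpreted as: $E((x,i),(y,j))$ iff $E^{\mathbf T}(x,y)$; for each $m$-ary $R\in L_{\mathbf T^*}\setminus\{E,<\}$, $R((x_1,i_1),\dots,(x_m,i_m))$ iff $R^{\mathbf T^*}(x_1,\dots,x_m)$; $(x,i)<(y,j)$ iff $x<^*y$, or $x=y$ and $i\prec j$. *)

(* Defs.v *)
(* finite structures have finType carriers; (Q,<) is mathcomp's rat. *)
From Stdlib Require List.
From HB Require Import structures.
From mathcomp Require Import all_boot all_order all_algebra.
Set Implicit Arguments. Unset Strict Implicit. Unset Printing Implicit Defensive.

Definition tournament (T : Type) (E : T -> T -> Prop) : Prop :=
  (forall x, ~ E x x) /\
  (forall x y, x <> y -> (E x y \/ E y x)) /\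
  (forall x y, E x y -> ~ E y x).

Definition automorphism (T : Type) (E : T -> T -> Prop) (g : T -> T) : Prop :=
  bijective g /\ forall x y, E x y <-> E (g x) (g y).

Definition homogeneous (T : Type) (E : T -> T -> Prop) : Prop :=
  forall (S : seq T) (f : T -> T),
    (forall x y, List.In x S -> List.In y S -> f x = f y -> x = y) ->
    (forall x y, List.In x S -> List.In y S -> (E x y <-> E (f x) (f y))) ->
    exists g, automorphism E g /\ forall x, List.In x S -> g x = f x.

Definition countably_infinite (T : Type) : Prop :=
  exists e : nat -> T, bijective e.

Definition countable_type (I : Type) : Prop :=
  exists c : I -> nat, injective c.

Definition strict_linear_order (T : Type) (lt : T -> T -> Prop) : Prop :=
  (forall x, ~ lt x x) /\
  (forall x y z, lt x y -> lt y z -> lt x z) /\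
  (forall x y, x <> y -> lt x y \/ lt y x).

(* Structures in the language L* = {E, <} ∪ I, where symbol i : I has arity ar i. *)
Record starStr (I : Type) (ar : I -> nat) (X : Type) := StarStr {
  sE : X -> X -> Prop;
  sLt : X -> X -> Prop;
  sR : forall i : I, ('I_(ar i) -> X) -> Prop
}.
Arguments sR {I ar X} s i _.

Definition embE (X Y : Type) (EX : X -> X -> Prop) (EY : Y -> Y -> Prop) (f : X -> Y) :=
  injective f /\ forall x y, EX x y <-> EY (f x) (f y).

Definition embStar (I : Type) (ar : I -> nat) (X Y : Type)
    (A : starStr ar X) (B : starStr ar Y) (f : X -> Y) :=
  injective f /\
  (forall x y, sE A x y <-> sE B (f x) (f y)) /\
  (forall x y, sLt A x y <-> sLt B (f x) (f y)) /\
  (forall i (t : 'I_(ar i) -> X), sR A i t <-> sR B i (fun k => f (t k))).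

(* Membership in the age (up to isomorphism: embeddable). *)
Definition inAgeE (X Y : Type) (EX : X -> X -> Prop) (EY : Y -> Y -> Prop) :=
  exists f : X -> Y, embE EX EY f.

Definition inAgeStar (I : Type) (ar : I -> nat) (X Y : Type)
    (A : starStr ar X) (F : starStr ar Y) :=
  exists f : X -> Y, embStar A F f.

Definition expansion_property (I : Type) (ar : I -> nat) (Y : Type) (F : starStr ar Y) :=
  forall (A : finType) (EA : A -> A -> Prop), inAgeE EA (sE F) ->
  exists (B : finType) (EB : B -> B -> Prop), inAgeE EB (sE F) /\
    forall (As : starStr ar A) (Bs : starStr ar B),
      sE As = EA -> sE Bs = EB ->
      inAgeStar As F -> inAgeStar Bs F ->
      exists h : A -> B, embStar As Bs h.

(* T[I_omega]^* on T × nat. *)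
Definition blowup (I : Type) (ar : I -> nat) (T : Type) (Ts : starStr ar T)
    (prec : nat -> nat -> Prop) : starStr ar (T * nat) :=
  @StarStr I ar (T * nat) (fun p q => sE Ts p.1 q.1)
    (fun p q => sLt Ts p.1 q.1 \/ (p.1 = q.1 /\ prec p.2 q.2))
    (fun i t => sR Ts i (fun k => (t k).1)).

(* Main.v *)
Require Import Defs.
From HB Require Import structures.
From mathcomp Require Import all_boot all_order all_algebra.
From Stdlib Require Import Classical FunctionalExtensionality.
Import Order.TTheory GRing.Theory Num.Theory.

Definition rk {X : finType} (P : pred X) (key : X -> rat) (x : X) : nat :=
  #|[set y | P y && (key y < key x)%R]|.

Lemma rk_lt {X : finType} {P : pred X} {key : X -> rat} x y :
  P x -> (key x < key y)%R -> rk P key x < rk P key y.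
Proof.
move=> Px lt; apply: proper_card; apply/properP; split.
  apply/subsetP=> z; rewrite !inE => /andP[-> /lt_trans]; exact.
by exists x; rewrite !inE ?Px ?lt ?ltxx.
Qed.

Lemma rk_ltE {X : finType} {P : pred X} {key : X -> rat} x y :
  P x -> P y -> (key x < key y)%R = (rk P key x < rk P key y).
Proof.
move=> Px Py; case: (ltgtP (key x) (key y)) => [lt|gt|eq].
- by rewrite (rk_lt _ _ Px lt).
- by apply/esym/negbTE; rewrite -leqNgt ltnW // rk_lt.
- by rewrite /rk eq ltnn.
Qed.

Lemma rk_le {X : finType} {P : pred X} {key : X -> rat} x : rk P key x <= #|X|.
Proof. exact: max_card. Qed.

Lemma rk_pick {X : finType} (key : X -> rat) : injective key ->
  forall k, k < #|X| -> exists x, rk predT key x = k.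
Proof.
move=> kinj k hk.
have rkb x : rk predT key x < #|X|.
  rewrite -cardsT; apply: proper_card; apply/properP; split.
    by apply/subsetP => ?; rewrite inE.
  by exists x; rewrite !inE ?ltxx.
pose F : X -> 'I_#|X| := fun x => Ordinal (rkb x).
have Finj : injective F.
  move=> x y /(congr1 val) /= e; apply: kinj.
  case: (ltgtP (key x) (key y)) => [lt|gt|//].
  - by move: lt; rewrite (rk_ltE (P:=predT)) // e ltnn.
  - by move: gt; rewrite (rk_ltE (P:=predT)) // e ltnn.
have := inj_card_onto Finj _ (Ordinal hk).
rewrite card_ord leqnn => /(_ isT) /codomP [x /(congr1 val) /= e].
by exists x.
Qed.

Lemma cls {T : Type} {ET : T -> T -> Prop} {X : Type} {E : X -> X -> Prop} {phi : X -> T} :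
  tournament ET -> (forall x y, E x y <-> ET (phi x) (phi y)) ->
  forall a a', phi a = phi a' <-> (~ E a a' /\ ~ E a' a).
Proof.
move=> [Tirr [Ttot _]] hE a a'; split.
  by move=> e; rewrite !hE e; split; apply: Tirr.
move=> [n1 n2]; apply: NNPP => ne.
by case: (Ttot _ _ ne) => h; [apply: n1 | apply: n2]; apply/hE.
Qed.

Lemma pair_eq {U V : Type} {p q : U * V} : p.1 = q.1 -> p.2 = q.2 -> p = q.
Proof. by case: p q => ? ? [? ?] /= -> ->. Qed.

Theorem mainTheorem4 (T : Type) (ET : T -> T -> Prop)
  (I : Type) (ar : I -> nat) (ltT : T -> T -> Prop)
  (RT : forall i : I, ('I_(ar i) -> T) -> Prop)
  (prec : nat -> nat -> Prop) :
  countably_infinite T ->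
  tournament ET ->
  homogeneous ET ->
  countable_type I ->
  strict_linear_order ltT ->
  (exists h : nat -> rat, bijective h /\ forall i j, prec i j <-> (h i < h j)%R) ->
  expansion_property (@StarStr I ar T ET ltT RT) ->
  expansion_property (blowup (@StarStr I ar T ET ltT RT) prec).
Proof.
move=> [e [c ec ce]] Ttour _ _ [ltirr _] [hq [[hqi hK1 hK2] hprec]] EP.
have hqinj := can_inj hK1.
have cinj := can_inj ce.
have Tirr : forall x, ~ ET x x by case: Ttour.
move=> A EA [f [finj fE]].
pose rep (a : A) := odflt a [pick a' | c (f a').1 == c (f a).1].
have rep_spec a : (f (rep a)).1 = (f a).1.
  rewrite /rep; case: pickP => [x /eqP /cinj|] //=.
have rep_eq a a' : (f a).1 = (f a').1 -> rep a = rep a'.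
  move=> H; rewrite /rep H; case: pickP => // H0.
  by have := H0 a'; rewrite eqxx.
have repE a a' : rep a = rep a' <-> (f a).1 = (f a').1.
  split; last exact: rep_eq.
  by move=> H; rewrite -(rep_spec a) -(rep_spec a') H.
have rep_idem a : rep (rep a) == rep a by apply/eqP/rep_eq/rep_spec.
pose A0 := {a : A | rep a == a}.
pose EA0 (x y : A0) := EA (val x) (val y).
have clsf := cls Ttour (phi := fun x => (f x).1) fE.
have HA0 : inAgeE EA0 ET.
  exists (fun x : A0 => (f (val x)).1); split.
    move=> x y /rep_eq; rewrite (eqP (valP x)) (eqP (valP y)); exact: val_inj.
  by move=> x y; apply: fE.
have [B0 [EB0 [[g [ginj gE]] P0]]] := EP A0 EA0 HA0.
have clsg := cls Ttour gE.
pose EB (p q : (B0 * 'I_#|A|.+1)%type) := EB0 p.1 q.1.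
exists (B0 * 'I_#|A|.+1)%type, EB; split.
  exists (fun p => (g p.1, val p.2)); split.
    by move=> [b i] [b' i'] /= [/ginj -> /val_inj ->].
  by move=> p q; apply: gE.
move=> As Bs HAs HBs [al [alinj [alE [alLt alR]]]] [be [beinj [beE [beLt beR]]]].
rewrite HAs in alE; rewrite HBs in beE.
have clsal := cls Ttour (phi := fun x => (al x).1) alE.
have clsbe := cls Ttour (phi := fun x => (be x).1) beE.
have K1 a a' : (al a).1 = (al a').1 <-> (f a).1 = (f a').1.
  by rewrite clsal clsf.
have K2 a : (al (rep a)).1 = (al a).1 by apply/K1/rep_spec.
have EB0irr b : ~ EB0 b b by move/gE; apply: Tirr.
have K3 b j j' : (be (b,j)).1 = (be (b,j')).1.
  by apply/(clsbe (b,j) (b,j')); split; apply: EB0irr.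
have K4 b b' : (be (b,ord0)).1 = (be (b',ord0)).1 -> b = b'.
  by move/(clsbe (b,ord0) (b',ord0)) => H; apply/ginj/(clsg b b').
pose As0 := @StarStr I ar A0 EA0 (fun x y => ltT (al (val x)).1 (al (val y)).1)
   (fun i t => RT i (fun k => (al (val (t k))).1)).
pose Bs0 := @StarStr I ar B0 EB0
   (fun b b' => ltT (be (b,ord0)).1 (be (b',ord0)).1)
   (fun i t => RT i (fun k => (be (t k, ord0)).1)).
have HAs0 : inAgeStar As0 (@StarStr I ar T ET ltT RT).
  exists (fun x : A0 => (al (val x)).1); split.
    move=> x y /K1 /rep_eq; rewrite (eqP (valP x)) (eqP (valP y)); exact: val_inj.
  split; first by move=> x y; exact: (alE (val x) (val y)).
  by split=> [x y|i t]; exact: iff_refl.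
have HBs0 : inAgeStar Bs0 (@StarStr I ar T ET ltT RT).
  exists (fun b => (be (b,ord0)).1); split; first exact: K4.
  split; first by move=> x y; exact: (beE (x,ord0) (y,ord0)).
  by split=> [x y|i t]; exact: iff_refl.
have [h0 [h0inj [h0E [h0Lt h0R]]]] := P0 As0 Bs0 erefl erefl HAs0 HBs0.
pose rep0 (a : A) : A0 := exist _ (rep a) (rep_idem a).
pose keyA a := hq (al a).2.
pose rkA a := rk [pred a' | rep a' == rep a] keyA a.
pose keyB b (j : 'I_#|A|.+1) := hq (be (b,j)).2.
pose rkB b j := rk predT (keyB b) j.
pose sel b k := odflt ord0 [pick j | rkB b j == k].
have sel_spec b k : k < #|A|.+1 -> rkB b (sel b k) = k.
  move=> hk; rewrite /sel; case: pickP => [j /eqP //|H].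
  have kinj : injective (keyB b).
    by move=> j j' /hqinj e2; case: (beinj _ _ (pair_eq (K3 b j j') e2)).
  have hk' : k < #|'I_#|A|.+1| by rewrite card_ord.
  have [j hj] := rk_pick _ kinj _ hk'.
  by have := H j; rewrite /rkB hj eqxx.
have rkA_lt a : rkA a < #|A|.+1 by rewrite ltnS rk_le.
have rkAE a a' : rep a = rep a' -> (keyA a < keyA a')%R = (rkA a < rkA a').
  move=> H; rewrite /rkA H (rk_ltE (P := [pred a'0 | rep a'0 == rep a'])) //= ?H eqxx //.
pose h a := (h0 (rep0 a), sel (h0 (rep0 a)) (rkA a)).
exists h; split.
  move=> a a' [e1 e2].
  have er : rep a = rep a' by have := h0inj _ _ e1; move/(congr1 val).
  rewrite e1 in e2.
  have := sel_spec (h0 (rep0 a')) _ (rkA_lt a); rewrite e2 sel_spec // => erk.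
  have e12 := proj2 (K1 a a') (proj1 (repE a a') er).
  case: (ltgtP (keyA a) (keyA a')) => [lt|gt|eq].
  - by move: lt; rewrite rkAE // erk ltnn.
  - by move: gt; rewrite rkAE // erk ltnn.
  - by apply/alinj/pair_eq => //; apply: hqinj.
split.
  move=> a a'; rewrite HAs HBs.
  apply: (iff_trans _ (h0E (rep0 a) (rep0 a'))).
  change (EA a a' <-> EA (rep a) (rep a')).
  rewrite (fE a) (fE (rep a)) /= !rep_spec; exact: iff_refl.
split.
  move=> a a'; rewrite alLt beLt /= /h /=.
  case: (eqVneq (rep a) (rep a')) => er.
  - have e1 : rep0 a = rep0 a' by apply: val_inj.
    have ea := proj2 (K1 a a') (proj1 (repE a a') er).
    rewrite -e1 !(K3 _ _ (sel (h0 (rep0 a)) (rkA a'))) ea !hprec.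
    split.
      case=> [/ltirr //|[_ lt]]; right; split => //.
      by rewrite -/(keyB _ _) -/(keyB _ _) (rk_ltE (P:=predT)) // -/(rkB _ _) -/(rkB _ _) !sel_spec // -rkAE.
    case=> [/ltirr //|[_ lt]]; right; split => //.
    move: lt; rewrite -/(keyB _ _) -/(keyB _ _) (rk_ltE (P:=predT)) // -/(rkB _ _) -/(rkB _ _) !sel_spec // -rkAE //.
  - have ne : (al a).1 <> (al a').1.
      by move/K1/repE/eqP; rewrite (negbTE er).
    have ne' : (be (h0 (rep0 a), sel (h0 (rep0 a)) (rkA a))).1 <>
               (be (h0 (rep0 a'), sel (h0 (rep0 a')) (rkA a'))).1.
      rewrite (K3 _ _ ord0) (K3 (h0 (rep0 a')) _ ord0) => /K4 /h0inj /(congr1 val) /=.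
      by move/eqP; rewrite (negbTE er).
    rewrite (K3 _ _ ord0) (K3 (h0 (rep0 a')) _ ord0) in ne' *.
    have HL := h0Lt (rep0 a) (rep0 a').
    change (ltT (al (rep a)).1 (al (rep a')).1 <->
      ltT (be (h0 (rep0 a), ord0)).1 (be (h0 (rep0 a'), ord0)).1) in HL.
    rewrite !K2 in HL.
    split => [[l|[eq _]] | [l|[eq _]]].
    - by left; apply/HL.
    - by exfalso; apply: ne.
    - by left; apply/HL.
    - by exfalso; apply: ne'.
move=> i t; rewrite alR beR /=.
have := h0R i (fun k => rep0 (t k)); rewrite /=.
have -> : (fun k => (al (rep (t k))).1) = (fun k => (al (t k)).1).
  by apply: functional_extensionality => k; rewrite K2.
have -> : (fun k => (be (h0 (rep0 (t k)), ord0)).1) = (fun k => (be (h (t k))).1).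
  by apply: functional_extensionality => k; rewrite /h (K3 _ _ ord0).
by [].
Qed.
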